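(* Fix $r^+\ge 8$. There is a constant $c_0=c_0(r^+)>1$ (depending only on $r^+$, not on $d$ or the bodies) such that for every convex body $K$ in $\mathbb{R}^d$, every $x\in\operatorname{int}(K)$, and every $y\in B_K(x,r^+)$, $$\tfrac{1}{c_0}A(x)\subseteq \mathcal{B}_K(y)\subseteq c_0A(x).$$
   Context: $K$ is a convex body (compact convex, nonempty interior). For $x\in\operatorname{int}(K)$, $A(x):=(K-x)\cap(x-K)$ (the Macbeath region $K\cap(2x-K)$ translated to the origin). $B_K(x,r)$ is the closed ball of radius $r$ about $x$ in the Hilbert metric $d_K(x,y)=\frac12\ln\left(\frac{\|y-x'\|}{\|x-x'\|}\frac{\|x-y'\|}{\|y-y'\|}\right)$, where $y'$ (resp. $x'$) is where the ray from $x$ through $y$ (resp. from $y$ through $x$) meets $\partial K$. For a convex body $E$ with $O\in\operatorname{int}E$, $\|v\|_E=\inf\{\lambda>0: v\in\lambda E\}$. The Hilbert Finsler ball at $y\in\operatorname{int}(K)$ is $\mathcal{B}_K(y)=\{v\in\mathbb{R}^d: \frac12(\|v\|_{K-y}+\|-v\|_{K-y})\le 1\}$. *)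

(* Defs.v *)
From HB Require Import structures.
From mathcomp Require Import all_boot all_order all_algebra.
From mathcomp Require Import all_classical all_reals all_analysis.
Set Implicit Arguments. Unset Strict Implicit. Unset Printing Implicit Defensive.
Import Order.TTheory GRing.Theory Num.Theory.
Import numFieldNormedType.Exports.
Local Open Scope classical_set_scope.
Local Open Scope ring_scope.

Section Defs.
Variables (R : realType) (d : nat).
Notation V := 'rV[R]_d.

Definition convex_set (K : set V) : Prop :=
  forall a b, K a -> K b -> forall t : R, 0 <= t <= 1 -> K ((1 - t) *: a + t *: b).

Definition convex_body (K : set V) : Prop :=
  compact K /\ convex_set K /\ (K°) !=set0.

Definition exit_param (K : set V) (p q : V) : R :=
  sup [set s : R | 0 <= s /\ K (p + s *: (q - p))].

Definition exit_point (K : set V) (p q : V) : V :=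
  p + exit_param K p q *: (q - p).

(* Hilbert distance d_K(x,y); y' = exit point of ray x->y, x' = exit point of ray y->x.
   Ratios of lengths along a line do not depend on the chosen norm. *)
Definition hilbert_dist (K : set V) (x y : V) : R :=
  if x == y then 0 else
  let y' := exit_point K x y in
  let x' := exit_point K y x in
  ln ((`|y - x'| / `|x - x'|) * (`|x - y'| / `|y - y'|)) / 2.

Definition hilbert_ball (K : set V) (x : V) (r : R) : set V :=
  [set y | (K°) y /\ hilbert_dist K x y <= r].

Definition gauge (E : set V) (v : V) : R :=
  inf [set l : R | 0 < l /\ exists2 e, E e & v = l *: e].

Definition translate (K : set V) (y : V) : set V := [set z - y | z in K].

Definition finsler_ball (K : set V) (y : V) : set V :=
  [set v | (gauge (translate K y) v + gauge (translate K y) (- v)) / 2 <= 1].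

Definition macbeath0 (K : set V) (x : V) : set V :=
  [set v | K (x + v) /\ K (x - v)].

Definition scale_set (c : R) (S : set V) : set V := [set c *: v | v in S].
End Defs.

(* Main.v *)
Require Import Defs.
From HB Require Import structures.
From mathcomp Require Import all_boot all_order all_algebra.
From mathcomp Require Import all_classical all_reals all_analysis.
From mathcomp Require Import ring lra.
Import Order.TTheory GRing.Theory Num.Theory.
Import numFieldNormedType.Exports.
Local Open Scope classical_set_scope.
Local Open Scope ring_scope.

Section Aux.
Variables (R : realType) (d : nat).
Notation V := 'rV[R]_d.

Lemma int_step (K : set V) (q v : V) : (K°) q -> exists2 t : R, 0 < t & K (q + t *: v).
Proof.
move/nbhs_ballP => [e /= e0 hb].
have hv : 0 < `|v| + 1 by rewrite ltr_pwDr // normr_ge0.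
set t := e / (2 * (`|v| + 1)).
have t0 : 0 < t by rewrite /t divr_gt0 // mulr_gt0.
exists t => //; apply: hb.
rewrite -ball_normE /ball_ /= opprD addrA subrr add0r normrN normrZ gtr0_norm //.
have -> : e = 2 * (t * (`|v| + 1)) by rewrite /t; field; rewrite gt_eqF.
have := normr_ge0 v; nra.
Qed.

Lemma conv_pt (K : set V) (a b : V) (t : R) : Defs.convex_set K -> K a -> K b ->
  0 <= t <= 1 -> K (a + t *: (b - a)).
Proof.
move=> cK Ka Kb t01.
have -> : a + t *: (b - a) = (1 - t) *: a + t *: b.
  by apply/rowP => i; rewrite !mxE; ring.
exact: (cK a b Ka Kb t t01).
Qed.

Lemma gauge_ge0 (E : set V) v : 0 <= gauge E v.
Proof.
rewrite /gauge.
set S := [set l : R | _].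
have [[l Sl]|S0] := pselect (S !=set0).
  apply: lb_le_inf; first by exists l.
  by move=> z [z0 _]; exact: ltW.
have -> : S = set0 by apply/seteqP; split => // z Sz; apply: S0; exists z.
by rewrite inf0.
Qed.

Lemma gauge_le (E : set V) v l e : 0 < l -> E e -> v = l *: e -> gauge E v <= l.
Proof.
move=> l0 Ee ->; apply: ge_inf; last by split => //; exists e.
by exists 0 => z [z0 _]; exact: ltW.
Qed.

Lemma gauge_lt (K : set V) y v a : (K°) y -> gauge (translate K y) v < a ->
  exists l e, [/\ 0 < l, K (y + e), v = l *: e & l < a].
Proof.
move=> yi ga.
have [t t0 Kt] := int_step K y v yi.
have [|l [l0 [e [z Kz <-] ->]] la] := inf_lt _ ga.
  exists t^-1; split; first by rewrite invr_gt0.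
  exists (t *: v); first by exists (y + t *: v) => //; rewrite addrC addKr.
  by rewrite scalerA mulVf ?scale1r // gt_eqF.
by exists l, (z - y); split => //; rewrite addrC subrK.
Qed.
Lemma exit_lem (K : set V) (p q : V) : compact K -> Defs.convex_set K -> K p -> (K°) q ->
  p != q ->
  1 < exit_param K p q /\ exists2 l : R,
    (exit_param K p q - 1) / (exit_param K p q + 1) <= l &
    forall z, K z -> K (q + l *: (z - p)).
Proof.
move=> cK cvK Kp qi pq.
rewrite /exit_param; set S := [set s : R | _]; set sg := sup S.
have Kq : K q := interior_subset qi.
have qp0 : 0 < `|q - p| by rewrite normr_gt0 subr_eq0 eq_sym.
have [M0 [_ hM]] := compact_bounded cK.
have hB : forall z, K z -> `|z| <= M0 + 1.
  by move=> z Kz; have := hM (M0 + 1); apply => //; rewrite ltrDl.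
have hS : has_sup S.
  split; first by exists 1; split => //; rewrite scale1r addrC subrK.
  exists ((M0 + 1 + `|p|) / `|q - p|) => s [s0 Ks].
  rewrite ler_pdivlMr //.
  have := hB _ Ks.
  have := ler_normB (p + s *: (q - p)) p; rewrite [p + _]addrC addrK.
  rewrite normrZ ger0_norm //; lra.
have [t t0 Kt] := int_step K q (q - p) qi.
have S1t : S (1 + t).
  split; first by rewrite addr_ge0 // ltW.
  have -> : p + (1 + t) *: (q - p) = q + t *: (q - p) by apply/rowP => i; rewrite !mxE; ring.
  exact: Kt.
have sg1 : 1 + t <= sg by exact: sup_upper_bound.
have sgt1 : 1 < sg by lra.
split => //.
have he : (sg - 1) / 2 * 2 = sg - 1 by rewrite mulfVK.
have [|s [s0 Ks] hs] := sup_adherent (_ : 0 < (sg - 1) / 2) hS.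
  by rewrite divr_gt0 // subr_gt0.
move: he hs; set e := (sg - 1) / 2 => he hs.
have {}hs : sg - e < s := hs.
have s1 : 1 < s by lra.
have sn0 : s != 0 by rewrite gt_eqF //; lra.
exists (1 - s^-1).
  have u0 : 0 < s^-1 by rewrite invr_gt0; lra.
  have su : s * s^-1 = 1 by rewrite mulfV.
  rewrite ler_pdivrMr; last lra.
  nra.
move=> z Kz.
have -> : q + (1 - s^-1) *: (z - p) = z + s^-1 *: ((p + s *: (q - p)) - z).
  by apply/rowP => i; rewrite !mxE; field.
apply: conv_pt => //.
rewrite invr_ge0 ltW /=; last lra.
rewrite invf_le1; lra.
Qed.

Lemma scal1 (s E l : R) : 1 < s -> s / (s - 1) <= E -> (s - 1) / (s + 1) <= l ->
  1 <= 2 * E * l.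
Proof.
move=> s1; rewrite ler_pdivrMr; last lra.
rewrite ler_pdivrMr; last lra.
move=> h1 h2.
have E1 : 1 <= E.
  have : s - 1 < s by lra.
  move=> h; nra.
nra.
Qed.

Lemma scal2 (a b E : R) : 1 <= a -> 1 <= b -> a * b <= E -> a <= E /\ b <= E.
Proof. move=> a1 b1 h; split; nra. Qed.

End Aux.

Theorem lemma3p3 (R : realType) (rplus : R) (hr : 8 <= rplus) :
  exists c0 : R, 1 < c0 /\
    forall (d : nat) (K : set 'rV[R]_d) (x y : 'rV[R]_d),
      convex_body K -> (K°) x -> hilbert_ball K x rplus y ->
      scale_set c0^-1 (macbeath0 K x) `<=` finsler_ball K y /\
      finsler_ball K y `<=` scale_set c0 (macbeath0 K x).
Proof.
set E := expR (2 * rplus).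
have E1 : 1 <= E by have := expR_ge1Dx (2 * rplus); rewrite -/E; lra.
exists (6 * E); split; first lra.
move=> d K x y [cK [cvK _]] xi [yi hd].
have [l [m [l0 m0 hl hm [Kl Km]]]] : exists l m, [/\ 0 < l, 0 < m, 1 <= 2 * E * l,
    1 <= 2 * E * m & (forall z, K z -> K (y + l *: (z - x))) /\
    (forall z, K z -> K (x + m *: (z - y)))].
  case: (eqVneq x y) => [<-|xy].
    exists 1, 1; split => //; try lra; split.
      by move=> z Kz; rewrite scale1r addrCA subrr addr0.
    by move=> z Kz; rewrite scale1r addrCA subrr addr0.
  have [s1 [l hl Kl]] := @exit_lem R d K x y cK cvK (interior_subset xi) yi xy.
  have yx : y != x by rewrite eq_sym.
  have [t1 [m hm Km]] := @exit_lem R d K y x cK cvK (interior_subset yi) xi yx.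
  move: hd; rewrite /hilbert_dist (negbTE xy) /exit_point.
  set sg := exit_param K x y; set ta := exit_param K y x.
  rewrite -/sg -/ta in s1 t1 hl hm.
  have e1 : y - (y + ta *: (x - y)) = ta *: (y - x) by apply/rowP => i; rewrite !mxE; ring.
  have e2 : x - (y + ta *: (x - y)) = (ta - 1) *: (y - x) by apply/rowP => i; rewrite !mxE; ring.
  have e3 : x - (x + sg *: (y - x)) = - (sg *: (y - x)) by apply/rowP => i; rewrite !mxE; ring.
  have e4 : y - (x + sg *: (y - x)) = - ((sg - 1) *: (y - x)) by apply/rowP => i; rewrite !mxE; ring.
  rewrite e1 e2 e3 e4 !normrN !normrZ !ger0_norm; try lra.
  have n0 : 0 < `|y - x| by rewrite normr_gt0 subr_eq0 eq_sym.
  set n := `|y - x|.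
  have -> : ta * n / ((ta - 1) * n) * (sg * n / ((sg - 1) * n)) =
     (ta / (ta - 1)) * (sg / (sg - 1)).
    field; do ![apply/andP; split]; rewrite ?gt_eqF //; lra.
  have a1 : 1 <= ta / (ta - 1) by rewrite ler_pdivlMr; lra.
  have b1 : 1 <= sg / (sg - 1) by rewrite ler_pdivlMr; lra.
  move=> hd.
  have hP : ta / (ta - 1) * (sg / (sg - 1)) <= E.
    rewrite -[X in X <= _]lnK; last by rewrite posrE; apply: mulr_gt0; lra.
    rewrite /E ler_expR; lra.
  have [ha hb] := @scal2 R _ _ _ a1 b1 hP.
  exists l, m; split => //.
  - have : 0 < (sg - 1) / (sg + 1) by apply: divr_gt0; lra.
    lra.
  - have : 0 < (ta - 1) / (ta + 1) by apply: divr_gt0; lra.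
    lra.
  - exact: (@scal1 R _ _ _ s1 hb hl).
  - exact: (@scal1 R _ _ _ t1 ha hm).
have c0n : 6 * E != 0 by rewrite gt_eqF //; lra.
have En0 : E != 0 by rewrite gt_eqF //; lra.
have ln0 : l != 0 by rewrite gt_eqF.
have mn0 : m != 0 by rewrite gt_eqF.
split.
- move=> _ [w [Kxw Kxmw] <-].
  rewrite /finsler_ball /=.
  have hc : 1 <= 6 * E * l by nra.
  have g1 : gauge (translate K y) ((6 * E)^-1 *: w) <= (6 * E * l)^-1.
    apply: (@gauge_le R d _ _ _ (l *: w)).
    + by rewrite invr_gt0; lra.
    + exists (y + l *: ((x + w) - x)); first exact: Kl.
      by apply/rowP => i; rewrite !mxE; ring.
    + by apply/rowP => j; rewrite !mxE; field; rewrite ln0 En0.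
  have g2 : gauge (translate K y) (- ((6 * E)^-1 *: w)) <= (6 * E * l)^-1.
    apply: (@gauge_le R d _ _ _ (- (l *: w))).
    + by rewrite invr_gt0; lra.
    + exists (y + l *: ((x - w) - x)); first exact: Kl.
      by apply/rowP => i; rewrite !mxE; ring.
    + by apply/rowP => i; rewrite !mxE; field; rewrite ln0 En0.
  have : (6 * E * l)^-1 <= 1 by rewrite invf_le1; lra.
  lra.
- move=> v hv.
  move: hv; rewrite /finsler_ball /= ler_pdivrMr // mul1r => hv.
  have key : forall u, gauge (translate K y) u <= 2 -> K (x + (6 * E)^-1 *: u).
    move=> u gu.
    have gu3 : gauge (translate K y) u < 3 by lra.
    have [l' [e [l'0 Ke -> l'3]]] := @gauge_lt R d K y u 3 yi gu3.
    have Kp := Km _ Ke.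
    have -> : x + (6 * E)^-1 *: (l' *: e) =
       x + (l' / (6 * E * m)) *: ((x + m *: ((y + e) - y)) - x).
      by apply/rowP => i; rewrite !mxE; field; rewrite mn0 En0.
    apply: conv_pt => //; first exact: interior_subset.
    have hc : 3 <= 6 * E * m by nra.
    rewrite divr_ge0 /=; try lra.
    by rewrite ler_pdivrMr; lra.
  have ga := @gauge_ge0 R d (translate K y) v.
  have gb := @gauge_ge0 R d (translate K y) (- v).
  exists ((6 * E)^-1 *: v); last by rewrite scalerA mulfV // scale1r.
  split; first by apply: key; lra.
  rewrite -scalerN; apply: key; lra.
Qed.
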